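(* For every $k\in\mathbb{N}$, the sequence $\{\alpha_k(n)\}_{n=2}^\infty$ defined by $\alpha_k(n)=\dfrac{\ell_k(n)}{\ell_k(n-1)}$ is decreasing and $\lim_{n\to\infty}\dfrac{\ell_k(n)}{\ell_k(n-1)}=1$.
   Context: For $x\ge1$ define $\ell_0(x)=1$, $\ell_1(x)=1+\ln x$, and recursively $\ell_j(x)=1+\ln\ell_{j-1}(x)$ for $j\ge2$. *)

(* Defs.v *)
From Stdlib Require Import Reals.
Open Scope R_scope.

Fixpoint ell (j : nat) (x : R) : R :=
  match j with
  | O => 1
  | S O => 1 + ln x
  | S j' => 1 + ln (ell j' x)
  end.

Definition alpha (k n : nat) : R := ell k (INR n) / ell k (INR n - 1).

(* Main.v *)
Require Import Defs.
From Stdlib Require Import Reals Lra Lia.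
Open Scope R_scope.

Fixpoint e (k : nat) (x : R) : R :=
  match k with
  | O => x
  | S k' => 1 + ln (e k' x)
  end.

Lemma ell_e k x : ell (S k) x = e (S k) x.
Proof.
  induction k as [|k IH]; [reflexivity|].
  change (1 + ln (ell (S k) x) = 1 + ln (e (S k) x)). now rewrite IH.
Qed.

Lemma ln_le' x y : 0 < x -> x <= y -> ln x <= ln y.
Proof.
  intros Hx Hxy; destruct (Rle_lt_or_eq_dec _ _ Hxy) as [H|H].
  - left; now apply ln_increasing.
  - subst; lra.
Qed.

Lemma ln_le_sub x : 0 < x -> ln x <= x - 1.
Proof.
  intros Hx. pose proof (exp_ineq1_le (ln x)). rewrite exp_ln in H; lra.
Qed.

Lemma aux1 A C u v : 1 <= A -> A <= C -> 0 <= v -> v <= u ->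
  (C + v) / C <= (A + u) / A.
Proof.
  intros. replace ((C+v)/C) with (1 + v * / C) by (field; lra).
  replace ((A+u)/A) with (1 + u * / A) by (field; lra).
  apply Rplus_le_compat_l. apply Rmult_le_compat; try lra.
  - left; apply Rinv_0_lt_compat; lra.
  - apply Rinv_le_contravar; lra.
Qed.

Lemma aux2 A u : 1 <= A -> 0 <= u -> (A + u) / A <= 1 + u.
Proof.
  intros. replace ((A+u)/A) with (1 + u * / A) by (field; lra).
  apply Rplus_le_compat_l. rewrite <- (Rmult_1_r u) at 2.
  apply Rmult_le_compat_l; auto. rewrite <- Rinv_1. apply Rinv_le_contravar; lra.
Qed.

Lemma ge1 p q : 1 <= p -> p <= q -> 1 <= q / p.
Proof.
  intros. replace (q/p) with (1 + (q-p) * /p) by (field; lra).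
  assert (0 <= (q-p) * / p). { apply Rmult_le_pos; [lra| left; apply Rinv_0_lt_compat; lra]. }
  lra.
Qed.

Lemma key k : forall x y, 1 <= x -> x <= y ->
  1 <= e k x /\ e k x <= e k y /\
  e k (y+1) / e k y <= e k (x+1) / e k x /\
  e k (x+1) / e k x <= 1 + 1 / x.
Proof.
  induction k as [|k IH]; intros x y Hx Hxy; simpl.
  - split; [lra|split; [lra|split]].
    + replace ((y+1)/y) with (1 + /y) by (field; lra).
      replace ((x+1)/x) with (1 + /x) by (field; lra).
      apply Rplus_le_compat_l, Rinv_le_contravar; lra.
    + right; field; lra.
  - destruct (IH x y Hx Hxy) as [a1 [ac [rr rx]]].
    destruct (IH x (x+1) Hx ltac:(lra)) as [_ [ab _]].
    destruct (IH y (y+1) ltac:(lra) ltac:(lra)) as [c1 [cd _]].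
    set (a := e k x) in *. set (b := e k (x+1)) in *.
    set (c := e k y) in *. set (d := e k (y+1)) in *.
    assert (L: forall p q, 1 <= p -> p <= q -> ln q = ln p + ln (q / p)).
    { intros p q Hp Hq. rewrite <- ln_mult by (try apply Rdiv_lt_0_compat; lra).
      f_equal; field; lra. }
    assert (ln0 : forall t, 1 <= t -> 0 <= ln t).
    { intros t Ht. rewrite <- ln_1. apply ln_le'; lra. }
    assert (Hba : 1 <= b / a) by (apply ge1; lra).
    assert (Hdc : 1 <= d / c) by (apply ge1; lra).
    rewrite (L a b) by lra. rewrite (L c d) by lra.
    repeat split.
    + pose proof (ln0 a a1); lra.
    + apply Rplus_le_compat_l, ln_le'; lra.
    + rewrite <- !Rplus_assoc; apply aux1.
      * pose proof (ln0 a a1); lra.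
      * apply Rplus_le_compat_l, ln_le'; lra.
      * apply ln0; lra.
      * apply ln_le'; lra.
    + rewrite <- !Rplus_assoc; eapply Rle_trans. apply aux2. pose proof (ln0 a a1); lra. apply ln0; lra.
      pose proof (ln_le_sub (b/a) ltac:(lra)). lra.
Qed.

Lemma alpha_e k n : (2 <= n)%nat ->
  alpha (S k) n = e (S k) (INR n - 1 + 1) / e (S k) (INR n - 1).
Proof.
  intros. unfold alpha. rewrite !ell_e. do 2 f_equal. ring.
Qed.

Lemma INR_ge2 n : (2 <= n)%nat -> 2 <= INR n.
Proof. intros H. apply le_INR in H. simpl in H. lra. Qed.

Theorem lemma2p3 (k : nat) :
  (forall n : nat, (2 <= n)%nat -> alpha k (S n) <= alpha k n) /\
  Un_cv (fun n : nat => alpha k n) 1.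
Proof.
  destruct k as [|k].
  - unfold alpha; simpl. split.
    + intros; lra.
    + intros eps He. exists O. intros. unfold Rdiv. rewrite Rinv_1, Rmult_1_r.
      unfold Rdist, Rminus. rewrite Rplus_opp_r, Rabs_R0. lra.
  - split.
    + intros n Hn. rewrite !alpha_e by lia. rewrite S_INR.
      pose proof (INR_ge2 n Hn).
      replace (INR n + 1 - 1) with (INR n - 1 + 1) by ring.
      apply (key (S k) (INR n - 1) (INR n - 1 + 1)); lra.
    + intros eps He. destruct (INR_unbounded (/ eps + 2)) as [N HN].
      pose proof (Rinv_0_lt_compat _ He).
      exists N. intros n Hn. unfold Rdist.
      apply le_INR in Hn.
      assert (2 <= n)%nat.
      { destruct (Nat.le_gt_cases 2 n); auto. apply lt_INR in H0. simpl in H0. lra. }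
      rewrite alpha_e by auto. pose proof (INR_ge2 n H0).
      destruct (key (S k) (INR n - 1) (INR n - 1) ltac:(lra) ltac:(lra)) as [h1 [h2 [_ h4]]].
      destruct (key (S k) (INR n - 1) (INR n - 1 + 1) ltac:(lra) ltac:(lra)) as [_ [h5 _]].
      assert (1 <= e (S k) (INR n - 1 + 1) / e (S k) (INR n - 1)) by (apply ge1; lra).
      rewrite Rabs_right by lra.
      assert (1 / (INR n - 1) < eps).
      { unfold Rdiv. rewrite Rmult_1_l. rewrite <- (Rinv_inv eps).
        apply Rinv_lt_contravar. apply Rmult_lt_0_compat; lra. lra. }
      lra.
Qed.
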